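(* Let $A$ be a regular vertex of a phylogenetic quiver $\mathcal O$, let $B$ be a vertex of the clade $\mathcal O_A$, and set $m=h(A)$, $n=h(B)$ (so $n\ge m$). If $p^{n-m}([B])\neq[A]$, then $B$ is a phylogenetic vertex of $\mathcal O_A$ and $h_A(B)=n-m+1$.
   Context: A quiver consists of a class of vertices and, for each ordered pair of vertices $(A,B)$, a set of edges $A\to B$ (loops and multiple edges allowed). An evolution of length $m\ge 0$ is a sequence $A_0\leftarrow A_1\leftarrow\cdots\leftarrow A_m$ of vertices together with edges $A_k\to A_{k-1}$ ($1\le k\le m$); $A_0$ is its initial and $A_m$ its terminal vertex. Write $A\le B$ ($A$ is an ancestor of $B$, $B$ a descendant of $A$) if there is an evolution with initial vertex $A$ and terminal vertex $B$; $A,B$ are isotypic ($A\sim B$) if $A\le B$ and $B\le A$. A vertex $A$ is primitive if every ancestor of $A$ is isotypic to $A$. A full evolution for $X$ is an evolution with primitive initial vertex and terminal vertex $X$. The height $h(X)$ is the smallest length of a full evolution for $X$ ($\infty$ if none). An evolution $\alpha=(A_0\leftarrow\cdots\leftarrow A_m)$ embeds in $\beta=(B_0\leftarrow\cdots\leftarrow B_n)$ if $m\le n$ and there are $0\le r_0<\cdots<r_m\le n$ with $A_k\sim B_{r_k}$. A universal evolution for $X$ is a full evolution for $X$ embedding in every full evolution for $X$; $X$ is phylogenetic if one exists. A quiver is monotonous if $h(A)\ge h(B)$ for every edge $A\to B$; small if its isotypy classes form a set; phylogenetic if small, monotonous, and all vertices phylogenetic. For a phylogenetic quiver, $[A]$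 denotes the isotypy class of $A$, $\mathcal O_m$ the set of isotypy classes of vertices of height $m$, and for $m\ge1$ the parental map $p:\mathcal O_m\to\mathcal O_{m-1}$ is $p([A])=[A_{m-1}]$ where $A_0\leftarrow\cdots\leftarrow A_{m-1}\leftarrow A_m=A$ is any universal evolution for $A$ (well defined); $p^0$ is the identity. The clade $\mathcal O_A$ is the quiver formed by all descendants of $A$ in $\mathcal O$ and all edges between them; $h_A$ denotes height computed in $\mathcal O_A$, and phylogeneticity in $\mathcal O_A$ is likewise computed within $\mathcal O_A$. A vertex $A$ is regular if for every $B$ in $\mathcal O_A$ with $h(B)=h(A)$ there is an edge $B\to A$ in $\mathcal O$. *)

(* Defs.v *)
From Stdlib Require Import Arith.
Set Implicit Arguments.

(* A quiver is a type of vertices V with an edge-existence relation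
   E A B : "there is an edge A -> B".  Only existence of edges matters in
   every notion below. *)

Section Quiver.
Variables (V : Type) (E : V -> V -> Prop).

Definition evolution (a : nat -> V) (m : nat) : Prop :=
  forall k, 1 <= k <= m -> E (a k) (a (k - 1)).

Definition ancestor (A B : V) : Prop :=
  exists (a : nat -> V) (m : nat), evolution a m /\ a 0 = A /\ a m = B.

Definition isotypic (A B : V) : Prop := ancestor A B /\ ancestor B A.

Definition primitive (A : V) : Prop := forall B, ancestor B A -> isotypic B A.

Definition full_evolution (a : nat -> V) (m : nat) (X : V) : Prop :=
  evolution a m /\ primitive (a 0) /\ a m = X.

Definition height (X : V) (n : nat) : Prop :=
  (exists a, full_evolution a n X) /\
  (forall a k, full_evolution a k X -> n <= k).

Definition embeds (a : nat -> V) (m : nat) (b : nat -> V) (n : nat) : Prop :=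
  m <= n /\
  exists r : nat -> nat,
    (forall k, k < m -> r k < r (k + 1)) /\ r m <= n /\
    (forall k, k <= m -> isotypic (a k) (b (r k))).

Definition universal_evolution (a : nat -> V) (m : nat) (X : V) : Prop :=
  full_evolution a m X /\
  forall b n, full_evolution b n X -> embeds a m b n.

Definition phylogenetic_vertex (X : V) : Prop :=
  exists a m, universal_evolution a m X.

(* h(A) >= h(B) for every edge A -> B, with the convention h = infinity
   when no full evolution exists. *)
Definition monotonous : Prop :=
  forall A B m, E A B -> height A m -> exists n, height B n /\ n <= m.

(* Smallness is automatic: V is a type, so isotypy classes form a set. *)
Definition phylogenetic_quiver : Prop :=
  monotonous /\ forall X, phylogenetic_vertex X.

(* p([X]) = [Y] : Y is the penultimate vertex of a universal evolution of X *)
Definition parent (X Y : V) : Prop :=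
  exists a m, universal_evolution a m X /\ 1 <= m /\ isotypic (a (m - 1)) Y.

Fixpoint parent_iter (k : nat) (X Y : V) : Prop :=
  match k with
  | 0 => isotypic X Y
  | S k' => exists Z, parent_iter k' X Z /\ parent Z Y
  end.

Definition regular (A : V) : Prop :=
  forall B m, ancestor A B -> height A m -> height B m -> E B A.

End Quiver.

Definition clade_vertex (V : Type) (E : V -> V -> Prop) (A : V) : Type :=
  { x : V | ancestor E A x }.

Definition clade_edge (V : Type) (E : V -> V -> Prop) (A : V)
  (x y : clade_vertex E A) : Prop := E (proj1_sig x) (proj1_sig y).
Arguments clade_edge {V} E A x y.
Arguments clade_vertex {V} E A.

(* Main.v *)
Require Import Defs.
From Stdlib Require Import Arith Lia Classical ProofIrrelevance.

Definition catf {V} (a d : nat -> V) (p : nat) : nat -> V :=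
  fun i => if i <=? p then a i else d (i - p).
Definition shiftf {V} (b : nat -> V) (l : nat) : nat -> V := fun i => b (l + i).

Lemma catf_l {V} (a d : nat -> V) p i : i <= p -> catf a d p i = a i.
Proof. intros H; unfold catf; destruct (Nat.leb_spec i p); [reflexivity|lia]. Qed.
Lemma catf_r {V} (a d : nat -> V) p i : p < i -> catf a d p i = d (i - p).
Proof. intros H; unfold catf; destruct (Nat.leb_spec i p); [lia|reflexivity]. Qed.
Lemma catf_end {V} (a d : nat -> V) p k : a p = d 0 -> catf a d p (p + k) = d k.
Proof. intros H. destruct k. rewrite Nat.add_0_r, catf_l by lia; auto.
  rewrite catf_r by lia. f_equal; lia. Qed.

Lemma cat_evol {V} (E : V -> V -> Prop) a d p k :
  evolution E a p -> evolution E d k -> a p = d 0 -> evolution E (catf a d p) (p + k).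
Proof.
  intros Ha Hd H0 i Hi. unfold catf.
  destruct (Nat.leb_spec i p); destruct (Nat.leb_spec (i-1) p).
  - apply Ha; lia.
  - lia.
  - replace (i - 1) with p by lia. rewrite H0.
    replace (i - p) with 1 by lia. apply (Hd 1); lia.
  - replace (i - 1 - p) with (i - p - 1) by lia. apply Hd; lia.
Qed.

Lemma shift_evol {V} (E : V -> V -> Prop) b n l :
  evolution E b n -> l <= n -> evolution E (shiftf b l) (n - l).
Proof. intros Hb Hl i Hi. unfold shiftf. replace (l + (i-1)) with (l+i-1) by lia. apply Hb; lia. Qed.

Lemma prefix_evol {V} (E : V -> V -> Prop) b n l :
  evolution E b n -> l <= n -> evolution E b l.
Proof. intros Hb Hl i Hi; apply Hb; lia. Qed.

Lemma anc_refl {V} (E : V -> V -> Prop) x : ancestor E x x.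
Proof. exists (fun _ => x), 0. split; [intros k Hk; lia| auto]. Qed.

Lemma anc_trans {V} (E : V -> V -> Prop) x y z :
  ancestor E x y -> ancestor E y z -> ancestor E x z.
Proof. intros (a & p & Ha & Ha0 & Hap) (d & k & Hd & Hd0 & Hdk).
  exists (catf a d p), (p + k). split; [apply cat_evol; auto; congruence|].
  split. rewrite catf_l by lia; auto. rewrite catf_end by congruence; auto. Qed.

Lemma iso_sym {V} (E : V -> V -> Prop) x y : isotypic E x y -> isotypic E y x.
Proof. intros [H1 H2]; split; auto. Qed.
Lemma iso_trans {V} (E : V -> V -> Prop) x y z :
  isotypic E x y -> isotypic E y z -> isotypic E x z.
Proof. intros [H1 H2] [H3 H4]; split; eapply anc_trans; eauto. Qed.
Lemma iso_refl {V} (E : V -> V -> Prop) x : isotypic E x x.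
Proof. split; apply anc_refl. Qed.

Lemma evol_anc {V} (E : V -> V -> Prop) a p i j :
  evolution E a p -> i <= j <= p -> ancestor E (a i) (a j).
Proof. intros Ha Hij. exists (shiftf a i), (j - i). split.
  apply prefix_evol with (p - i). apply shift_evol; auto; lia. lia.
  unfold shiftf; split; f_equal; lia. Qed.

Lemma r_mono (r : nat -> nat) m : (forall k, k < m -> r k < r (k+1)) ->
  forall i j, i + j <= m -> r i + j <= r (i + j).
Proof. intros H i j; induction j; intros Hij. rewrite !Nat.add_0_r; lia.
  specialize (IHj ltac:(lia)). specialize (H (i+j) ltac:(lia)).
  replace (i + S j) with (i + j + 1) by lia. lia. Qed.

Lemma height_uniq {V} (E : V -> V -> Prop) X a b :
  height E X a -> height E X b -> a = b.
Proof. intros [[f Hf] Ha] [[g Hg] Hb]. specialize (Ha g b Hg). specialize (Hb f a Hf). lia. Qed.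

Lemma mono_evol {V} (E : V -> V -> Prop) a p q : monotonous E -> evolution E a p ->
  height E (a p) q -> exists q', height E (a 0) q' /\ q' <= q.
Proof. intros HM Ha Hq.
  assert (H : forall i, i <= p -> exists q', height E (a (p - i)) q' /\ q' <= q).
  { induction i; intros Hi. exists q; rewrite Nat.sub_0_r; auto.
    destruct (IHi ltac:(lia)) as (q1 & H1 & H2).
    destruct (HM _ _ _ (Ha (p - i) ltac:(lia)) H1) as (q2 & H3 & H4).
    exists q2. replace (p - S i) with (p - i - 1) by lia. split; auto; lia. }
  destruct (H p (le_n _)) as (q' & H1 & H2). rewrite Nat.sub_diag in H1. eauto. Qed.

Lemma mono_anc {V} (E : V -> V -> Prop) X Y q : monotonous E -> ancestor E X Y ->
  height E Y q -> exists q', height E X q' /\ q' <= q.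
Proof. intros HM (a & p & Ha & H0 & Hp) Hq. subst. eapply mono_evol; eauto. Qed.

Lemma univ_len {V} (E : V -> V -> Prop) b l X n :
  universal_evolution E b l X -> height E X n -> l = n.
Proof. intros [Hf Hu] [[f Hf'] Hmin]. specialize (Hmin _ _ Hf).
  destruct (Hu _ _ Hf') as [H _]. lia. Qed.

Lemma univ_prefix {V} (E : V -> V -> Prop) b n X l :
  universal_evolution E b n X -> l <= n -> universal_evolution E b l (b l).
Proof. intros [[Hb [Hp Hbn]] Hu] Hl. split. split; [eapply prefix_evol; eauto|split; auto].
  intros f q [Hf [Hf0 Hfq]].
  assert (Hg : full_evolution E (catf f (shiftf b l) q) (q + (n - l)) X).
  { split. apply cat_evol; auto. apply shift_evol; auto. unfold shiftf. rewrite Nat.add_0_r; auto.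
    split. rewrite catf_l by lia; auto. rewrite catf_end. unfold shiftf.
    replace (l + (n-l)) with n by lia; auto. unfold shiftf; rewrite Nat.add_0_r; auto. }
  destruct (Hu _ _ Hg) as [Hle (r & Hr1 & Hr2 & Hr3)].
  pose proof (r_mono r n Hr1 0 l ltac:(lia)) as M1. simpl in M1.
  pose proof (r_mono r n Hr1 l (n - l) ltac:(lia)) as M2.
  replace (l + (n-l)) with n in M2 by lia.
  split. lia. exists r. split. intros k Hk; apply Hr1; lia. split. lia.
  intros k Hk. specialize (Hr3 k ltac:(lia)).
  pose proof (r_mono r n Hr1 k (l - k) ltac:(lia)) as M3.
  replace (k + (l-k)) with l in M3 by lia.
  rewrite catf_l in Hr3 by lia. exact Hr3.
Qed.

Lemma parent_chain {V} (E : V -> V -> Prop) b n X : universal_evolution E b n X ->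
  forall j, j <= n -> parent_iter E j X (b (n - j)).
Proof. intros HU. induction j; intros Hj.
  - simpl. rewrite Nat.sub_0_r. destruct HU as [[_ [_ H]] _]. rewrite H. apply iso_refl.
  - simpl. exists (b (n - j)). split. apply IHj; lia.
    exists b, (n - j). split. apply univ_prefix with n X; auto; lia. split. lia.
    replace (n - j - 1) with (n - S j) by lia. apply iso_refl.
Qed.

Lemma parent_iter_iso {V} (E : V -> V -> Prop) k X Y Y' :
  parent_iter E k X Y -> isotypic E Y Y' -> parent_iter E k X Y'.
Proof. destruct k; simpl. apply iso_trans.
  intros (Z & H1 & (a & p & H2 & H3 & H4)) H5. exists Z; split; auto.
  exists a, p; split; auto; split; auto. eapply iso_trans; eauto. Qed.

Lemma clade_eq {V} (E : V -> V -> Prop) A (x y : clade_vertex E A) :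
  proj1_sig x = proj1_sig y -> x = y.
Proof. destruct x, y; simpl; intros ->. f_equal. apply proof_irrelevance. Qed.

Lemma clade_lift {V} (E : V -> V -> Prop) A a p : ancestor E A (a 0) -> evolution E a p ->
  exists c : nat -> clade_vertex E A, evolution (clade_edge E A) c p /\
    forall i, i <= p -> proj1_sig (c i) = a i.
Proof. intros H0 Ha.
  assert (HA : forall i, i <= p -> ancestor E A (a i)).
  { intros i Hi. eapply anc_trans; [exact H0|]. apply evol_anc with p; auto; lia. }
  exists (fun i => match le_dec i p with left h => exist _ (a i) (HA i h)
                   | right _ => exist _ (a 0) H0 end).
  split.
  - intros k Hk. unfold clade_edge. destruct (le_dec k p); [|lia].
    destruct (le_dec (k-1) p); [|lia]. simpl. apply Ha; auto.
  - intros i Hi. destruct (le_dec i p); [reflexivity|lia].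
Qed.

Lemma clade_anc {V} (E : V -> V -> Prop) A (x y : clade_vertex E A) :
  ancestor E (proj1_sig x) (proj1_sig y) -> ancestor (clade_edge E A) x y.
Proof. intros (a & p & Ha & H0 & Hp).
  destruct (clade_lift E A a p) as (c & Hc & Hv). rewrite H0; exact (proj2_sig x). auto.
  exists c, p. split; auto. split; apply clade_eq; rewrite Hv; auto; lia. Qed.

Lemma clade_iso {V} (E : V -> V -> Prop) A (x y : clade_vertex E A) :
  isotypic E (proj1_sig x) (proj1_sig y) -> isotypic (clade_edge E A) x y.
Proof. intros [H1 H2]; split; apply clade_anc; auto. Qed.

Lemma clade_proj_anc {V} (E : V -> V -> Prop) A (x y : clade_vertex E A) :
  ancestor (clade_edge E A) x y -> ancestor E (proj1_sig x) (proj1_sig y).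
Proof. intros (c & p & Hc & H0 & Hp). exists (fun i => proj1_sig (c i)), p.
  split. intros k Hk; apply Hc; auto. subst; auto. Qed.

Lemma clade_proj_iso {V} (E : V -> V -> Prop) A (x y : clade_vertex E A) :
  isotypic (clade_edge E A) x y -> isotypic E (proj1_sig x) (proj1_sig y).
Proof. intros [H1 H2]; split; apply clade_proj_anc; auto. Qed.

Theorem lemma9p6 (V : Type) (E : V -> V -> Prop) (A B : V) (m n : nat)
  (hQ : phylogenetic_quiver E)
  (hA : regular E A)
  (hB : ancestor E A B)
  (hm : height E A m)
  (hn : height E B n)
  (hp : ~ parent_iter E (n - m) B A) :
  phylogenetic_vertex (clade_edge E A) (exist _ B hB) /\
  height (clade_edge E A) (exist _ B hB) (n - m + 1).
Proof.
  destruct hQ as [HM HP].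
  destruct (HP B) as (b & l & HU).
  pose proof (univ_len _ _ _ _ _ HU hn) as Hl. subst l.
  pose proof HU as HU'.
  destruct HU as [[Hb [Hb0 Hbn]] Hu].
  assert (Hmn : m <= n).
  { destruct (mono_anc E A B n HM hB hn) as (q & Hq & Hqn).
    rewrite (height_uniq _ _ _ _ hm Hq). auto. }
  pose proof hm as [[a [Ha [Ha0 Ham]]] Hmin].
  assert (Hkey : ~ isotypic E (b m) A).
  { intro H. apply hp. apply parent_iter_iso with (b m); auto.
    pose proof (parent_chain E b n B HU' (n - m) ltac:(lia)) as H0.
    replace (n - (n - m)) with m in H0 by lia. exact H0. }
  assert (HAC : ancestor E A (b m)).
  { pose proof hB as (p & j & Hp & Hp0 & Hpj).
    assert (Hg : full_evolution E (catf a p m) (m + j) B).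
    { split. apply cat_evol; auto; congruence. split. rewrite catf_l by lia; auto.
      rewrite catf_end; congruence. }
    destruct (Hu _ _ Hg) as [Hle (r & Hr1 & Hr2 & Hr3)].
    pose proof (r_mono r n Hr1 0 m ltac:(lia)) as M. simpl in M.
    pose proof (r_mono r n Hr1 m (n - m) ltac:(lia)) as M2.
    replace (m + (n-m)) with n in M2 by lia.
    specialize (Hr3 m Hmn).
    destruct (Nat.eq_dec (r m) m) as [e|ne].
    - rewrite e, catf_l in Hr3 by lia. rewrite Ham in Hr3. apply Hr3.
    - rewrite catf_r in Hr3 by lia. eapply anc_trans; [|apply Hr3].
      rewrite <- Hp0. apply evol_anc with j; auto. lia. }
  assert (HhC : height E (b m) m).
  { split. exists b. split. eapply prefix_evol; eauto. split; auto.
    intros f q [Hf [Hf0 Hfq]].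
    assert (Hg : full_evolution E (catf f (shiftf b m) q) (q + (n - m)) B).
    { split. apply cat_evol; auto. apply shift_evol; auto. unfold shiftf; rewrite Nat.add_0_r; auto.
      split. rewrite catf_l by lia; auto. rewrite catf_end. unfold shiftf.
      replace (m + (n - m)) with n by lia; auto. unfold shiftf; rewrite Nat.add_0_r; auto. }
    destruct hn as [_ Hnmin]. specialize (Hnmin _ _ Hg). lia. }
  pose proof (hA (b m) m HAC hm HhC) as HE.
  pose (u := fun i => match i with 0 => A | S i => b (m + i) end).
  assert (Huev : evolution E u (n - m + 1)).
  { intros k Hk. destruct k; [lia|]. destruct k.
    - simpl. rewrite Nat.add_0_r. exact HE.
    - pose proof (Hb (m + S k) ltac:(lia)) as H.
      replace (m + S k - 1) with (m + k) in H by lia. simpl. exact H. }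
  destruct (clade_lift E A u (n - m + 1) (anc_refl E A) Huev) as (U & HUev & HUv).
  assert (HU0 : proj1_sig (U 0) = A) by (rewrite HUv by lia; reflexivity).
  assert (HUanc : forall Y, ancestor (clade_edge E A) (U 0) Y).
  { intros Y. apply clade_anc. rewrite HU0. exact (proj2_sig Y). }
  assert (HUU : universal_evolution (clade_edge E A) U (n - m + 1) (exist _ B hB)).
  { split.
    - split; auto. split.
      + intros Y HY. split; auto.
      + apply clade_eq. rewrite HUv by lia. simpl.
        replace (n - m + 1) with (S (n - m)) by lia. simpl.
        replace (m + (n - m)) with n by lia. auto.
    - intros d k [Hd [Hd0 Hdk]].
      assert (HAX : isotypic E A (proj1_sig (d 0))).
      { pose proof (clade_proj_iso E A _ _ (Hd0 _ (HUanc (d 0)))) as H. rewrite HU0 in H. exact H. }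
      pose (e := fun i => proj1_sig (d i)).
      assert (Hev : evolution E e k) by (intros i Hi; apply Hd; auto).
      assert (Hek : e k = B) by (unfold e; rewrite Hdk; reflexivity).
      destruct (mono_anc E (e 0) A m HM (proj2 HAX) hm) as (q & Hq & Hqm).
      destruct Hq as [[fX [HfX [HfX0 HfXq]]] _].
      assert (Hg : full_evolution E (catf fX e q) (q + k) B).
      { split. apply cat_evol; auto. split. rewrite catf_l by lia; auto.
        rewrite catf_end; auto. }
      destruct (Hu _ _ Hg) as [Hle (r & Hr1 & Hr2 & Hr3)].
      pose proof (r_mono r n Hr1 0 m ltac:(lia)) as M1. simpl in M1.
      pose proof (r_mono r n Hr1 m (n - m) ltac:(lia)) as M2.
      replace (m + (n-m)) with n in M2 by lia.
      assert (Hrm : q < r m).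
      { destruct (Nat.lt_ge_cases q (r m)) as [h|h]; auto. exfalso.
        assert (r m = q) by lia.
        pose proof (Hr3 m Hmn) as H3. rewrite H, catf_l, HfXq in H3 by lia.
        apply Hkey. eapply iso_trans; [exact H3|]. apply iso_sym. exact HAX. }
      split. lia.
      exists (fun i => match i with 0 => 0 | S i => r (m + i) - q end).
      split; [|split].
      + intros i Hi. destruct i.
        * simpl. rewrite Nat.add_0_r. lia.
        * replace (S i + 1) with (S (S i)) by lia.
          pose proof (Hr1 (m + i) ltac:(lia)) as H1.
          pose proof (r_mono r n Hr1 m i ltac:(lia)) as H2.
          replace (m + i + 1) with (m + S i) in H1 by lia. lia.
      + replace (n - m + 1) with (S (n - m)) by lia.
        replace (m + (n - m)) with n by lia. lia.
      + intros i Hi. apply clade_iso. rewrite HUv by lia. destruct i.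
        * exact HAX.
        * simpl. pose proof (r_mono r n Hr1 m i ltac:(lia)) as H2.
          pose proof (Hr3 (m + i) ltac:(lia)) as H3.
          rewrite catf_r in H3 by lia. exact H3. }
  split.
  - exists U, (n - m + 1). exact HUU.
  - split. exists U. exact (proj1 HUU).
    intros d k Hfd. destruct (proj2 HUU d k Hfd) as [H _]. exact H.
Qed.
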